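(* Let $k\ge1$, let $\mathbf{T}_1,\dots,\mathbf{T}_k$ be finite trees, and let $A$ be a permutation (a bijective FDS). Then $C_k(\mathbf{T}_1,\dots,\mathbf{T}_k)\times A=(C_kA)(\mathbf{T}_1,\dots,\mathbf{T}_k)$.
   Context: A finite dynamical system (FDS) is a function $A:S_A\to S_A$ on a finite set, considered up to isomorphism of functional graphs (arcs $x\to A(x)$). The product $AB$ acts on $S_A\times S_B$ by $(a,b)\mapsto(A(a),B(b))$. $C_n$ is the FDS whose functional graph is a directed cycle of length $n$. A (finite) tree is a rooted in-tree: an acyclic weakly connected digraph with a root having no outgoing arc, every other vertex having one outgoing arc towards the root. For a permutation $B$ all of whose cycle lengths are multiples of $k$ and trees $\mathbf{T}_1,\dots,\mathbf{T}_k$, $B(\mathbf{T}_1,\dots,\mathbf{T}_k)$ denotes the FDS obtained by traversing each cycle of $B$ following the arrows from some starting state and, for the $i$-th state encountered ($i=1,2,\dots$), attaching a copy of $\mathbf{T}_{((i-1)\bmod k)+1}$ by identifying its root with that state (the tree's arcs keep pointing towards the root). Note that every cycle length of $C_kA$ is a multiple of $k$. *)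

(* Defs.v *)
From mathcomp Require Import all_boot.
Set Implicit Arguments.

Unset Strict Implicit.
Unset Printing Implicit Defensive.

Record fds := FDS { fS : finType; fmap : fS -> fS }.

Definition fds_iso (A B : fds) : Prop :=
  exists h : fS A -> fS B, bijective h /\ forall x, h (@fmap A x) = @fmap B (h x).

Definition fds_prod (A B : fds) : fds :=
  @FDS (fS A * fS B)%type (fun p => (@fmap A p.1, @fmap B p.2)).

Definition cycleC (k : nat) : fds := @FDS 'I_k (@ordS k).

Definition permutation (A : fds) : Prop := bijective (@fmap A).

(* A finite rooted in-tree: vertex set tV, root troot, and arcs v -> tpar v
   for v <> troot (tpar troot = troot is a harmless convention: the root
   has no outgoing arc). *)
Record tree := Tree {
  tV : finType;
  troot : tV;
  tpar : tV -> tV;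
  troot_fix : tpar troot = troot;
  treach : forall v, exists n, iter n tpar v = troot }.

(* A "traversal labelling" of a permutation B: the position mod k of each
   state along its cycle, starting from some chosen starting state of each
   cycle; i.e. the starting state has label 0 and following an arrow adds 1
   mod k.  Such labellings are exactly the choices of starting states when
   all cycle lengths are multiples of k. *)
Definition trav_labeling (k : nat) (B : fds) (lab : fS B -> 'I_k) : Prop :=
  forall x, lab (@fmap B x) = ordS (lab x).

(* B(T_1,...,T_k) w.r.t. a traversal labelling lab: at each state x of B a
   copy of T_(lab x) is attached by identifying its root with x. *)
Definition attach (k : nat) (B : fds) (T : 'I_k -> tree) (lab : fS B -> 'I_k)
  : fds :=
  @FDS {x : fS B & tV (T (lab x))}
    (fun p => let: existT x v := p in
       if v == troot (T (lab x))
       then existT (fun y => tV (T (lab y))) (@fmap B x) (troot (T (lab (@fmap B x))))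
       else existT (fun y => tV (T (lab y))) x (tpar v)).

Arguments trav_labeling : clear implicits.
Arguments attach : clear implicits.

(* Main.v *)
Require Import Defs.
From mathcomp Require Import all_boot.

Set Implicit Arguments.
Unset Strict Implicit.
Unset Printing Implicit Defensive.

Lemma iso_trans (X Y Z : fds) : fds_iso X Y -> fds_iso Y Z -> fds_iso X Z.
Proof.
case=> f [bf cf] [g [bg cg]]; exists (g \o f); split; first exact: bij_comp.
by move=> x /=; rewrite cf cg.
Qed.

Lemma treachb (t : tree) (v : tV t) : exists n, iter n (@tpar t) v == troot t.
Proof. by case: (treach v) => n hn; exists n; apply/eqP. Qed.

Definition depth (t : tree) (v : tV t) : nat := ex_minn (treachb v).

Lemma depth_root (t : tree) : depth (troot t) = 0.
Proof.
rewrite /depth; case: ex_minnP => m _ /(_ 0); rewrite /= eqxx => /(_ isT).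
by rewrite leqn0 => /eqP.
Qed.

Lemma depth_par (t : tree) (v : tV t) : v != troot t -> depth v = (depth (tpar v)).+1.
Proof.
move=> hv; rewrite /depth; case: ex_minnP => m hm hmin.
case: ex_minnP => m' hm' hmin'.
case: m hm hmin => [|n] hm hmin; first by rewrite /= (negbTE hv) in hm.
rewrite iterSr in hm; have h1 := hmin' _ hm.
have : iter m'.+1 (@tpar t) v == troot t by rewrite iterSr.
move=> /hmin h2; apply/eqP; by rewrite eqn_leq h2 /= ltnS h1.
Qed.

Lemma iterK (T : Type) (f g : T -> T) : cancel f g -> forall n, cancel (iter n f) (iter n g).
Proof.
move=> fK; elim=> [|n IH] x //.
by rewrite iterSr iterS fK IH.
Qed.

Section Cast.
Variables (k : nat) (T : 'I_k -> tree).

Definition tcast (i j : 'I_k) (e : i = j) (v : tV (T i)) : tV (T j) :=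
  match e in _ = j return tV (T j) with erefl => v end.

Lemma tcast_root i j (e : i = j) : tcast e (troot (T i)) = troot (T j).
Proof. by case: j / e. Qed.

Lemma tcast_par i j (e : i = j) v : tcast e (tpar v) = tpar (tcast e v).
Proof. by case: j / e. Qed.

Lemma tcast_eq i j (e : i = j) v : (tcast e v == troot (T j)) = (v == troot (T i)).
Proof. by case: j / e. Qed.

Lemma tcast3 i j m (e1 : i = j) (e2 : j = m) (e3 : m = i) v :
  tcast e3 (tcast e2 (tcast e1 v)) = v.
Proof.
move: e2 e3; case: j / e1 => e2; case: m / e2 => e3.
by rewrite (eq_irrelevance e3 erefl).
Qed.

Lemma existT_tcast (X : Type) (l : X -> 'I_k) x x' (ex : x' = x)
  (w : tV (T (l x'))) (v : tV (T (l x))) :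
  tcast (f_equal l ex) w = v ->
  existT (fun y => tV (T (l y))) x' w = existT _ x v.
Proof. by move: v; case: x / ex => v /= <-. Qed.

End Cast.

Lemma attach_relabel k (B : fds) (T : 'I_k -> tree) (lab lab' : fS B -> 'I_k)
  (psi : fS B -> fS B) :
  bijective psi -> (forall x, psi (@fmap B x) = @fmap B (psi x)) ->
  (forall x, lab' (psi x) = lab x) ->
  fds_iso (attach k B T lab) (attach k B T lab').
Proof.
move=> [psi' pK Kp] hc hl.
have E x : lab x = lab' (psi x) by rewrite hl.
have E' y : lab' y = lab (psi' y) by rewrite -[in LHS](Kp y) hl.
exists (fun p => let: existT x v := p in
  existT (fun y => tV (T (lab' y))) (psi x) (tcast (E x) v)).
split.
  exists (fun p => let: existT y w := p in
    existT (fun x => tV (T (lab x))) (psi' y) (tcast (E' y) w)).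
    by case=> x v /=; apply: (@existT_tcast k T (fS B) lab _ _ (pK x)); apply: tcast3.
  by case=> x v /=; apply: (@existT_tcast k T (fS B) lab' _ _ (Kp x)); apply: tcast3.
case=> x v /=; rewrite tcast_eq; case: ifP => _ /=.
  by rewrite tcast_root hc.
by rewrite tcast_par.
Qed.

Lemma prod_attach_shift k (T : 'I_k -> tree) (lab1 : 'I_k -> 'I_k) (A : fds) :
  permutation A ->
  fds_iso (fds_prod (attach k (cycleC k) T lab1) A)
          (attach k (fds_prod (cycleC k) A) T (fun x : 'I_k * fS A => lab1 x.1)).
Proof.
case=> Ai AK KA.
exists (fun p : fS (fds_prod (attach k (cycleC k) T lab1) A) =>
  let: (existT i v, a) := p in
  existT (fun x : 'I_k * fS A => tV (T (lab1 x.1))) (i, iter (depth v) (@fmap A) a) v).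
split.
  exists (fun p : {x : 'I_k * fS A & tV (T (lab1 x.1))} =>
    (existT (fun i : 'I_k => tV (T (lab1 i))) (projT1 p).1 (projT2 p),
     iter (depth (projT2 p)) Ai (projT1 p).2)).
    by case=> [[i v] a] /=; rewrite iterK.
  by case=> [[i b] w] /=; rewrite (iterK KA).
case=> [[i v] a] /=; case hv: (v == troot _) => /=.
  by rewrite (eqP hv) !depth_root.
by rewrite (depth_par (negbT hv)) iterSr.
Qed.

Theorem mainTheorem9 (k : nat) (hk : 0 < k) (T : 'I_k -> tree) (A : fds)
  (hA : permutation A)
  (lab1 : fS (cycleC k) -> 'I_k) (h1 : trav_labeling k (cycleC k) lab1)
  (lab2 : fS (fds_prod (cycleC k) A) -> 'I_k)
  (h2 : trav_labeling k (fds_prod (cycleC k) A) lab2) :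
  fds_iso (fds_prod (attach k (cycleC k) T lab1) A)
          (attach k (fds_prod (cycleC k) A) T lab2).
Proof.
apply: iso_trans (prod_attach_shift T lab1 hA) _.
pose P := @fmap (fds_prod (cycleC k) A).
have labit (l : 'I_k * fS A -> 'I_k) : (forall y, l (P y) = ordS (l y)) ->
    forall n y, val (l (iter n P y)) = (l y + n) %% k.
  move=> hl; elim=> [|n IH] y; first by rewrite addn0 modn_small.
  by rewrite iterS hl /= IH addnS -addn1 modnDml addn1.
have l1P : forall y, lab1 (P y).1 = ordS (lab1 y.1) by move=> y; apply: h1.
have l2P : forall y, lab2 (P y) = ordS (lab2 y) by move=> y; apply: h2.
pose e (y : 'I_k * fS A) := (lab1 y.1 + k - lab2 y) %% k.
have he y : (lab2 y + e y) %% k = lab1 y.1.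
  have hle : lab2 y <= lab1 y.1 + k.
    exact: leq_trans (ltnW (ltn_ord _)) (leq_addl _ _).
  rewrite /e modnDmr (subnKC hle) modnDr.
  exact: modn_small (ltn_ord _).
have uniq b n m : n < k -> m < k -> (b + n) %% k = (b + m) %% k -> n = m.
  move=> hn hm /eqP; rewrite eqn_modDl !modn_small // => /eqP.
  by [].
have eP y : e (P y) = e y.
  apply: (uniq (lab2 (P y))); [exact: ltn_pmod | exact: ltn_pmod |].
  rewrite (he (P y)) (labit _ l2P 1) (labit _ l1P 1).
  by rewrite modnDml addnAC -(modnDml (lab2 y + e y)) he.
have eit n y : e (iter n P y) = e y by elim: n => [|n IH] //; rewrite iterS eP IH.
pose psi y := iter (e y) P y.
have Pinj : injective P.
  case: hA => Ai AK KA.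
  move=> [i a] [j b] h.
  have hij : ordS i = ordS j := congr1 fst h.
  have hab : @fmap A a = @fmap A b := congr1 snd h.
  by rewrite (bij_inj (ordS_bij k) hij) (can_inj AK hab).
have iterinj n : injective (iter n P).
  by elim: n => [|n IH] x y //; rewrite !iterS => /Pinj /IH.
apply: (@attach_relabel k (fds_prod (cycleC k) A) T (fun x : 'I_k * fS A => lab1 x.1) lab2 psi).
- apply: injF_bij => y z hyz.
  have eyz : e y = e z by rewrite -(eit (e y) y) -(eit (e z) z); exact: congr1 hyz.
  by move: hyz; rewrite /psi eyz => /iterinj.
- by move=> y; rewrite /psi eP -iterSr.
- by move=> y; apply: val_inj; rewrite /psi (labit _ l2P) he.
Qed.
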